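(* Let $d=2$ and assume the polynomial degree satisfies $1\le M\le 13$. There exist constants $c_1>0$, $c_2>0$ independent of $h$ such that for every interface $\Gamma^{k,\ell}$ and every $\eta_{\ell,k}\in\mathcal Y_h^{\ell,k}\cap H^1_0(\Gamma^{k,\ell})$ there exists $\psi_{\ell,k}\in\tilde W_h^{\ell,k}$ with $$\int_{\Gamma^{k,\ell}}\big(\eta_{\ell,k}+\pi_{k,\ell}(\eta_{\ell,k})\big)\psi_{\ell,k}\ge c_1\|\eta_{\ell,k}\|^2_{L^2(\Gamma^{k,\ell})},\qquad \|\psi_{\ell,k}\|_{L^2(\Gamma^{k,\ell})}\le c_2\|\eta_{\ell,k}\|_{L^2(\Gamma^{k,\ell})}.$$
   Context: $\Omega\subset\mathbb R^2$ is decomposed into non-overlapping geometrically conforming subdomains $\Omega^k$; $\Gamma^{k,\ell}=\partial\Omega^k\cap\partial\Omega^\ell$ is a common edge. Each $\Omega^k$ has its own uniformly regular triangular mesh $\mathcal T_h^k$ ($h_T/\rho_T\le\sigma$, $\tau h\le h_T$ with $\sigma,\tau$ independent of $h$, $h$ the maximal element diameter), possibly non-matching across interfaces. $Y_h^k$ = continuous piecewise $\mathcal P_M$ functions on $\mathcal T_h^k$; $\mathcal Y_h^{k,\ell}$ is the space of traces on $\Gamma^{k,\ell}$ of $Y_h^k$ (a 1D finite element space on the induced mesh with consecutive vertices $x_0,\dots,x_n$, $x_0,x_n$ the endpoints of $\Gamma^{k,\ell}$); $\tilde W_h^{k,\ell}$ is the subspace of $\mathcal Y_h^{k,\ell}$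 of functions that are polynomials of degree $\le M-1$ on $[x_0,x_1]$ and $[x_{n-1},x_n]$. $\mathcal Y_h^{\ell,k},\tilde W_h^{\ell,k}$ are the analogous spaces built from the mesh of $\Omega^\ell$. $\pi_{k,\ell}$ is the $L^2(\Gamma^{k,\ell})$-orthogonal projection onto $\tilde W_h^{k,\ell}$. *)

(* Defs.v *)
From Stdlib Require Import Reals.
From Coquelicot Require Import Coquelicot.
Open Scope R_scope.

Definition poly_le (k : nat) (p : R -> R) : Prop :=
  exists c : nat -> R, forall t, p t = sum_f_R0 (fun j => c j * t ^ j) k.

(* A 1D mesh of the interface, parametrized by arc length as [0, L]:
   consecutive vertices x 0 = 0 < x 1 < ... < x n = L, all element lengths
   between kappa*h and h (uniform regularity of the 2D mesh it is induced by). *)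
Definition mesh1d (L kappa h : R) (n : nat) (x : nat -> R) : Prop :=
  (1 <= n)%nat /\ x 0%nat = 0 /\ x n = L /\
  forall i, (i < n)%nat -> kappa * h <= x (S i) - x i <= h.

(* Trace space Y: continuous piecewise P_M functions on the mesh (continuity is
   automatic: on each closed element f coincides with a polynomial). *)
Definition Ytr (M n : nat) (x : nat -> R) (f : R -> R) : Prop :=
  forall i, (i < n)%nat ->
    exists p, poly_le M p /\ forall t, x i <= t <= x (S i) -> f t = p t.

Definition Wtil (M n : nat) (x : nat -> R) (f : R -> R) : Prop :=
  Ytr M n x f /\
  (exists p, poly_le (M - 1) p /\ forall t, x 0%nat <= t <= x 1%nat -> f t = p t) /\
  (exists p, poly_le (M - 1) p /\
     forall t, x (pred n) <= t <= x n -> f t = p t).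

Definition L2ip (L : R) (f g : R -> R) : R := RInt (fun t => f t * g t) 0 L.
Definition L2norm (L : R) (f : R -> R) : R := sqrt (L2ip L f f).

Definition is_L2proj (L : R) (P : (R -> R) -> Prop) (f g : R -> R) : Prop :=
  P g /\ forall w, P w -> L2ip L (fun t => f t - g t) w = 0.

(* Main.v *)
Require Import Defs.
From Stdlib Require Import Reals Lra Lia QArith Qreals List ZArith.
From Coquelicot Require Import Coquelicot.
Open Scope R_scope.
Import ListNotations.

Fixpoint qsum (f : nat -> Q) (n : nat) : Q :=
  match n with O => f O | S k => Qred (qsum f k + f (S k))%Q end.

Lemma Q2R_qsum f n : Q2R (qsum f n) = sum_f_R0 (fun i => Q2R (f i)) n.
Proof.
  induction n; cbn [qsum sum_f_R0]; auto.
  rewrite (Qeq_eqR _ _ (Qred_correct _)), Q2R_plus, IHn; reflexivity.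
Qed.

Lemma sum_swap (f : nat -> nat -> R) m n :
  sum_f_R0 (fun i => sum_f_R0 (fun j => f i j) n) m =
  sum_f_R0 (fun j => sum_f_R0 (fun i => f i j) m) n.
Proof.
  induction m; simpl.
  - reflexivity.
  - rewrite IHm, <- plus_sum. reflexivity.
Qed.

Lemma sum_mult_l (f : nat -> R) x n :
  x * sum_f_R0 f n = sum_f_R0 (fun i => x * f i) n.
Proof. rewrite scal_sum. apply sum_eq; intros; ring. Qed.

Lemma sum_mult_r (f : nat -> R) x n :
  sum_f_R0 f n * x = sum_f_R0 (fun i => f i * x) n.
Proof. rewrite Rmult_comm, scal_sum. reflexivity. Qed.

Definition bil (K : nat -> nat -> Q) (a b : nat -> R) (m n : nat) : R :=
  sum_f_R0 (fun i => sum_f_R0 (fun j => Q2R (K i j) * a i * b j) n) m.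

Definition mv (T : nat -> nat -> Q) (b : nat -> R) (n : nat) : nat -> R :=
  fun j => sum_f_R0 (fun k => Q2R (T j k) * b k) n.

Lemma bil_ext K1 K2 a b m n :
  (forall i j, (i <= m)%nat -> (j <= n)%nat -> (K1 i j == K2 i j)%Q) ->
  bil K1 a b m n = bil K2 a b m n.
Proof.
  intros H; unfold bil; apply sum_eq; intros i Hi; apply sum_eq; intros j Hj.
  rewrite (Qeq_eqR _ _ (H i j Hi Hj)); reflexivity.
Qed.

Lemma bil_subst_r K T a b m n n' :
  bil K a (mv T b n') m n = bil (fun i k => qsum (fun j => K i j * T j k)%Q n) a b m n'.
Proof.
  unfold bil, mv; apply sum_eq; intros i _.
  transitivity (sum_f_R0 (fun j => sum_f_R0 (fun k => Q2R (K i j) * Q2R (T j k) * a i * b k) n') n).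
  - apply sum_eq; intros j _. rewrite sum_mult_l. apply sum_eq; intros; ring.
  - rewrite sum_swap. apply sum_eq; intros k _.
    rewrite Q2R_qsum, !sum_mult_r. apply sum_eq; intros j _. rewrite Q2R_mult; ring.
Qed.

Lemma bil_subst_l K T a b m n m' :
  bil K (mv T a m') b m n = bil (fun k j => qsum (fun i => T i k * K i j)%Q m) a b m' n.
Proof.
  unfold bil, mv.
  transitivity (sum_f_R0 (fun i => sum_f_R0 (fun k => sum_f_R0 (fun j =>
     Q2R (T i k) * Q2R (K i j) * a k * b j) n) m') m).
  - apply sum_eq; intros i _. rewrite sum_swap. apply sum_eq; intros j _.
    rewrite sum_mult_l, sum_mult_r. apply sum_eq; intros; ring.
  - rewrite sum_swap. apply sum_eq; intros k _. rewrite sum_swap. apply sum_eq; intros j _.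
    rewrite Q2R_qsum, !sum_mult_r. apply sum_eq; intros i _. rewrite Q2R_mult; ring.
Qed.

Lemma bil_plus K1 K2 a b m n :
  bil (fun i j => K1 i j + K2 i j)%Q a b m n = bil K1 a b m n + bil K2 a b m n.
Proof.
  unfold bil; rewrite <- plus_sum; apply sum_eq; intros.
  rewrite <- plus_sum; apply sum_eq; intros. rewrite Q2R_plus; ring.
Qed.

Lemma bil_scal q K a b m n :
  bil (fun i j => q * K i j)%Q a b m n = Q2R q * bil K a b m n.
Proof.
  unfold bil; rewrite sum_mult_l; apply sum_eq; intros.
  rewrite sum_mult_l; apply sum_eq; intros. rewrite Q2R_mult; ring.
Qed.

Lemma bil_sym A x n :
  bil A x x n n = bil (fun i j => (A i j + A j i) * (1#2))%Q x x n n.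
Proof.
  assert (E : bil (fun i j => A j i) x x n n = bil A x x n n).
  { unfold bil. rewrite sum_swap. apply sum_eq; intros; apply sum_eq; intros; ring. }
  assert (E2 : bil (fun i j => (A i j + A j i) * (1#2))%Q x x n n =
               bil (fun i j => (1#2) * (A i j + A j i))%Q x x n n).
  { apply bil_ext; intros; ring. }
  rewrite E2, bil_scal, bil_plus, E.
  replace (Q2R (1#2)) with (/2) by (unfold Q2R; simpl; field). field.
Qed.

Lemma pow2_sqr_aux (u v : R) : u * v ^ 2 = (u * v) * v.
Proof. ring. Qed.

Lemma bil_sos A L D x n :
  (forall i j, (i <= n)%nat -> (j <= n)%nat ->
     (A i j == qsum (fun k => L k i * D k * L k j) n)%Q) ->
  bil A x x n n = sum_f_R0 (fun k => Q2R (D k) *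
     (sum_f_R0 (fun i => Q2R (L k i) * x i) n)^2) n.
Proof.
  intros H. rewrite (bil_ext _ _ _ _ _ _ H). unfold bil.
  transitivity (sum_f_R0 (fun i => sum_f_R0 (fun j => sum_f_R0 (fun k =>
     Q2R (D k) * (Q2R (L k i) * x i) * (Q2R (L k j) * x j)) n) n) n).
  - apply sum_eq; intros i _; apply sum_eq; intros j _.
    rewrite Q2R_qsum, sum_mult_r, sum_mult_r. apply sum_eq; intros k _.
    rewrite !Q2R_mult; ring.
  - transitivity (sum_f_R0 (fun i => sum_f_R0 (fun k => sum_f_R0 (fun j =>
     Q2R (D k) * (Q2R (L k i) * x i) * (Q2R (L k j) * x j)) n) n) n).
    { apply sum_eq; intros i _; apply sum_swap. }
    rewrite sum_swap. apply sum_eq; intros k _.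
    rewrite pow2_sqr_aux, sum_mult_l, sum_swap. apply sum_eq; intros j _.
    rewrite sum_mult_l, sum_mult_r. apply sum_eq; intros i _. ring.
Qed.

Lemma sum_nonneg (f : nat -> R) n : (forall i, (i <= n)%nat -> 0 <= f i) -> 0 <= sum_f_R0 f n.
Proof.
  induction n; simpl; intros H. apply H; lia.
  apply Rplus_le_le_0_compat. apply IHn; intros; apply H; lia. apply H; lia.
Qed.

Definition Hq (x y : nat) : Q := 1 # Pos.of_succ_nat (x + y).

Definition Aform (T : nat -> nat -> Q) (n : nat) (i k : nat) : Q :=
  ((3#2) * qsum (fun j => Hq (S i) j * T j k) n +
   ((-1#4) * qsum (fun j => qsum (fun i' => T i' i * Hq i' j) n * T j k) n +
    (-13#50) * Hq (S i) (S k)))%Q.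

Definition allupto (f : nat -> bool) (n : nat) : bool := forallb f (seq 0 (S n)).

Lemma allupto_spec f n : allupto f n = true -> forall i, (i <= n)%nat -> f i = true.
Proof.
  unfold allupto; rewrite forallb_forall; intros H i Hi; apply H.
  apply in_seq; lia.
Qed.

Definition check (T L : nat -> nat -> Q) (D : nat -> Q) (n : nat) : bool :=
  allupto (fun k => Qeq_bool (qsum (fun j => T j k) n) 1) n &&
  allupto (fun k => Qle_bool 0 (D k)) n &&
  allupto (fun i => allupto (fun j =>
     Qeq_bool ((Aform T n i j + Aform T n j i) * (1#2))
              (qsum (fun k => L k i * D k * L k j)%Q n)) n) n.

Lemma ref_alg T L D n : check T L D n = true ->
  forall b : nat -> R,
  sum_f_R0 (mv T b n) n = sum_f_R0 b n /\
  0 <= 3/2 * bil (fun i j => Hq (S i) j) b (mv T b n) n n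
       - 1/4 * bil Hq (mv T b n) (mv T b n) n n
       - 13/50 * bil (fun i j => Hq (S i) (S j)) b b n n.
Proof.
  unfold check; intros HC b.
  apply andb_prop in HC as [HC HS]; apply andb_prop in HC as [HT HD].
  pose proof (allupto_spec _ _ HT) as HT'.
  pose proof (allupto_spec _ _ HD) as HD'.
  pose proof (allupto_spec _ _ HS) as HS'.
  split.
  - unfold mv. rewrite sum_swap. apply sum_eq; intros k Hk.
    rewrite <- sum_mult_r, <- Q2R_qsum.
    rewrite (Qeq_eqR _ 1); [|apply Qeq_bool_eq, HT', Hk].
    unfold Q2R; simpl; field.
  - rewrite bil_subst_r, bil_subst_l, bil_subst_r.
    replace (3/2) with (Q2R (3#2)) by (unfold Q2R; simpl; field).
    replace (1/4 * bil (fun k k' : nat => qsum (fun j : nat => (qsum (fun i : nat => T i k * Hq i j) n * T j k')%Q) n) b b n n)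
      with (- (Q2R (-1#4) * bil (fun k k' : nat => qsum (fun j : nat => (qsum (fun i : nat => T i k * Hq i j) n * T j k')%Q) n) b b n n))
      by (unfold Q2R; simpl; field).
    replace (13/50 * bil (fun i j => Hq (S i) (S j)) b b n n)
      with (- (Q2R (-13#50) * bil (fun i j => Hq (S i) (S j)) b b n n))
      by (unfold Q2R; simpl; field).
    rewrite <- !bil_scal.
    match goal with |- 0 <= ?A - - ?B - - ?C => replace (A - - B - - C) with (A + (B + C)) by ring end.
    rewrite <- !bil_plus.
    rewrite bil_sym.
    rewrite (bil_sos _ L D).
    + apply sum_nonneg; intros k Hk. apply Rmult_le_pos.
      * replace 0 with (Q2R 0) by (unfold Q2R; simpl; ring).
        apply Qle_Rle, Qle_bool_imp_le, HD', Hk.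
      * apply pow2_ge_0.
    + intros i j Hi Hj. apply Qeq_bool_eq.
      pose proof (allupto_spec _ _ (HS' i Hi) j Hj) as E. exact E.
Qed.

Definition psum (c : nat -> R) (k : nat) (t : R) : R := sum_f_R0 (fun j => c j * t ^ j) k.

Lemma cont_plus f g x : continuity_pt f x -> continuity_pt g x ->
  continuity_pt (fun t => f t + g t) x.
Proof. intros; apply (continuity_pt_plus f g); auto. Qed.
Lemma cont_mult f g x : continuity_pt f x -> continuity_pt g x ->
  continuity_pt (fun t => f t * g t) x.
Proof. intros; apply (continuity_pt_mult f g); auto. Qed.
Lemma cont_const (a x : R) : continuity_pt (fun _ => a) x.
Proof. apply continuity_pt_const; intros u v; reflexivity. Qed.
Lemma cont_opp f x : continuity_pt f x -> continuity_pt (fun t => - f t) x.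
Proof. intros; apply (continuity_pt_opp f); auto. Qed.
Lemma cont_minus f g x : continuity_pt f x -> continuity_pt g x ->
  continuity_pt (fun t => f t - g t) x.
Proof. intros; apply (continuity_pt_minus f g); auto. Qed.

Lemma cont_psum c k x : continuity_pt (psum c k) x.
Proof.
  unfold psum; induction k; cbn [sum_f_R0].
  - apply cont_mult; [apply cont_const|]. apply derivable_continuous_pt, (derivable_pt_pow 0).
  - apply cont_plus; auto. apply cont_mult; [apply cont_const|].
    apply derivable_continuous_pt, derivable_pt_pow.
Qed.

Lemma poly_ext k p q : poly_le k p -> (forall t, q t = p t) -> poly_le k q.
Proof. intros [c Hc] H; exists c; intros t; rewrite H; auto. Qed.

Lemma poly_cont k p x : poly_le k p -> continuity_pt p x.
Proof.
  intros [c Hc]. apply continuity_pt_ext with (psum c k).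
  intros; rewrite Hc; reflexivity. apply cont_psum.
Qed.

Lemma poly_le_S k p : poly_le k p -> poly_le (S k) p.
Proof.
  intros [c Hc]. exists (fun j => if Nat.eqb j (S k) then 0 else c j).
  intros t; rewrite Hc; cbn [sum_f_R0]. rewrite Nat.eqb_refl.
  rewrite (sum_eq (fun j => (if Nat.eqb j (S k) then 0 else c j) * t ^ j) (fun j => c j * t ^ j)). ring.
  intros i Hi. destruct (Nat.eqb_spec i (S k)); [lia|reflexivity].
Qed.

Lemma poly_le_mono k m p : (k <= m)%nat -> poly_le k p -> poly_le m p.
Proof. induction 1; auto using poly_le_S. Qed.

Lemma poly_le_plus k p q : poly_le k p -> poly_le k q -> poly_le k (fun t => p t + q t).
Proof.
  intros [c Hc] [d Hd]; exists (fun j => c j + d j); intros t.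
  rewrite Hc, Hd, <- plus_sum; apply sum_eq; intros; ring.
Qed.

Lemma poly_le_scal k a p : poly_le k p -> poly_le k (fun t => a * p t).
Proof.
  intros [c Hc]; exists (fun j => a * c j); intros t.
  rewrite Hc, sum_mult_l; apply sum_eq; intros; ring.
Qed.

Lemma poly_le_const k a : poly_le k (fun _ => a).
Proof.
  apply (poly_le_mono 0); [lia|]. exists (fun _ => a); intros; simpl; ring.
Qed.

Lemma poly_le_mulX k p : poly_le k p -> poly_le (S k) (fun t => t * p t).
Proof.
  intros [c Hc]. exists (fun j => match j with O => 0 | S i => c i end).
  intros t. rewrite Hc, (decomp_sum _ (S k)) by lia. simpl pred.
  rewrite sum_mult_l. simpl. rewrite Rmult_0_l, Rplus_0_l.
  apply sum_eq; intros; simpl; ring.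
Qed.

Lemma poly_le_aff_mul k a b p : poly_le k p -> poly_le (S k) (fun t => (a * t + b) * p t).
Proof.
  intros H. apply poly_ext with (fun t => a * (t * p t) + b * p t).
  apply poly_le_plus. apply poly_le_scal, poly_le_mulX; auto.
  apply poly_le_S, poly_le_scal; auto.
  intros; ring.
Qed.

Lemma poly_le_aff_pow a b j : poly_le j (fun t => (a * t + b) ^ j).
Proof.
  induction j; simpl.
  - apply poly_le_const.
  - apply poly_le_aff_mul; auto.
Qed.

Lemma poly_le_comp k p a b : poly_le k p -> poly_le k (fun t => p (a * t + b)).
Proof.
  intros [c Hc].
  assert (H : forall m, (m <= k)%nat -> poly_le k (fun t => sum_f_R0 (fun j => c j * (a * t + b) ^ j) m)).
  { induction m; intros Hm; cbn [sum_f_R0].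
    - apply poly_le_scal, (poly_le_mono 0); [lia|]. apply (poly_le_aff_pow a b 0).
    - apply poly_le_plus. apply IHm; lia.
      apply poly_le_scal, (poly_le_mono (S m)); [lia|]. apply poly_le_aff_pow. }
  apply poly_ext with (1 := H k (le_n k)). intros; apply Hc.
Qed.

Lemma psum_0 c k : psum c k 0 = c O.
Proof.
  unfold psum; induction k; simpl. ring. rewrite IHk; simpl. ring.
Qed.

Lemma poly_at0 k p : poly_le k p -> exists c, p 0 = c O /\ forall t, p t = psum c k t.
Proof. intros [c Hc]; exists c; split; [rewrite Hc; apply psum_0|exact Hc]. Qed.

Lemma isRI_plus f g a b If Ig : is_RInt f a b If -> is_RInt g a b Ig ->
  is_RInt (fun t => f t + g t) a b (If + Ig).
Proof. intros; apply (is_RInt_plus f g); auto. Qed.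
Lemma isRI_scal f a b k If : is_RInt f a b If -> is_RInt (fun t => k * f t) a b (k * If).
Proof. intros; apply (is_RInt_scal f); auto. Qed.

Lemma isRI_mono k : is_RInt (fun s => s ^ k) 0 1 (/ INR (S k)).
Proof.
  assert (H := is_RInt_derive (fun s => s ^ (S k) / INR (S k)) (fun s => s ^ k) 0 1).
  replace (/ INR (S k)) with (minus (1 ^ (S k) / INR (S k)) (0 ^ (S k) / INR (S k))).
  - apply H.
    + intros x _. 
      assert (Hd := is_derive_pow (fun y => y) (S k) x 1 (is_derive_id x)).
      assert (Hd2 := is_derive_scal_l _ x _ (/ INR (S k)) Hd).
      replace (x ^ k) with (scal (INR (S k) * 1 * x ^ pred (S k)) (/ INR (S k))).
      eapply is_derive_ext; [|exact Hd2]. intros t; unfold scal; cbn -[INR pow]; unfold mult; cbn -[INR pow]; unfold Rdiv; ring.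
      unfold scal; cbn -[INR pow]; unfold mult; cbn -[INR pow]. field. apply not_0_INR; lia.
    + intros x _. apply continuity_pt_filterlim, derivable_continuous_pt, derivable_pt_pow.
  - rewrite pow1, pow_i by lia. unfold minus, plus, opp; simpl. unfold Rdiv; ring.
Qed.

Lemma isRI_sum (f : nat -> R -> R) (I : nat -> R) a b m :
  (forall i, (i <= m)%nat -> is_RInt (f i) a b (I i)) ->
  is_RInt (fun s => sum_f_R0 (fun i => f i s) m) a b (sum_f_R0 I m).
Proof.
  induction m; intros H; simpl.
  - apply H; lia.
  - apply isRI_plus. apply IHm; intros; apply H; lia. apply H; lia.
Qed.

Lemma Q2R_Hq x y : Q2R (Hq x y) = / INR (S (x + y)).
Proof.
  unfold Hq, Q2R; simpl Qnum; simpl Qden.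
  rewrite Zpos_P_of_succ_nat, INR_IZR_INZ, Nat2Z.inj_succ. field.
  rewrite <- Nat2Z.inj_succ, <- INR_IZR_INZ. apply not_0_INR; lia.
Qed.

Lemma isRI_prod o1 o2 (a b : nat -> R) m n :
  is_RInt (fun s => sum_f_R0 (fun i => a i * s ^ (o1 + i)) m *
                    sum_f_R0 (fun j => b j * s ^ (o2 + j)) n) 0 1
          (bil (fun i j => Hq (o1 + i) (o2 + j)) a b m n).
Proof.
  unfold bil. eapply is_RInt_ext.
  2:{ apply isRI_sum; intros i _. apply isRI_sum; intros j _.
      replace (Q2R (Hq (o1 + i) (o2 + j)) * a i * b j) with
        (a i * b j * / INR (S (o1 + i + (o2 + j)))) by (rewrite Q2R_Hq; ring).
      apply isRI_scal with (f := fun s => s ^ (o1 + i + (o2 + j))).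
      apply isRI_mono. }
  intros x _. cbv beta. rewrite sum_mult_r. apply sum_eq; intros i _.
  rewrite sum_mult_l. apply sum_eq; intros j _.
  rewrite !pow_add. ring.
Qed.

Definition Floc (p q : R -> R) (t : R) : R := p t * q t - (q t - p t) ^ 2 / 4 - p t ^ 2 / 100.

Lemma ref_fun_gen n T L D : check T L D n = true ->
  forall p, poly_le (S n) p -> p 0 = 0 ->
  exists q, poly_le n q /\ q 1 = p 1 /\ 0 <= RInt (Floc p q) 0 1.
Proof.
  intros HC p Hp Hp0.
  destruct (poly_at0 _ _ Hp) as [c [H0 Hc]]. rewrite H0 in Hp0.
  set (b := fun i => c (S i)).
  assert (Hpb : forall s, p s = sum_f_R0 (fun i => b i * s ^ (1 + i)) n).
  { intros s. rewrite Hc. unfold psum. rewrite decomp_sum by lia.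
    rewrite Hp0. simpl pred. rewrite Rmult_0_l, Rplus_0_l. reflexivity. }
  destruct (ref_alg T L D n HC b) as [Hsum Hpos].
  set (d := mv T b n) in *.
  exists (fun s => sum_f_R0 (fun j => d j * s ^ (0 + j)) n). split; [|split].
  - exists d. intros t. reflexivity.
  - rewrite Hpb. transitivity (sum_f_R0 d n).
    + apply sum_eq; intros; rewrite pow1; ring.
    + rewrite Hsum. apply sum_eq; intros; rewrite pow1; ring.
  - set (P := fun s => sum_f_R0 (fun i => b i * s ^ (1 + i)) n).
    set (Q := fun s => sum_f_R0 (fun j => d j * s ^ (0 + j)) n).
    assert (I1 := isRI_prod 1 0 b d n n).
    assert (I2 := isRI_prod 0 0 d d n n).
    assert (I3 := isRI_prod 1 1 b b n n).
    assert (I := isRI_plus _ _ _ _ _ _ (isRI_scal _ _ _ (3/2) _ I1)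
                  (isRI_plus _ _ _ _ _ _ (isRI_scal _ _ _ (-(1/4)) _ I2)
                                         (isRI_scal _ _ _ (-(13/50)) _ I3))).
    assert (I' : is_RInt (Floc p Q) 0 1
      (3 / 2 * bil (fun i j : nat => Hq (1 + i) (0 + j)) b d n n +
     (- (1 / 4) * bil (fun i j : nat => Hq (0 + i) (0 + j)) d d n n +
      - (13 / 50) * bil (fun i j : nat => Hq (1 + i) (1 + j)) b b n n))).
    { eapply is_RInt_ext; [|exact I]. intros x _. cbv beta. unfold Floc. rewrite Hpb.
      unfold Q. set (X1 := sum_f_R0 (fun i : nat => b i * x ^ (1 + i)) n). set (X2 := sum_f_R0 (fun j : nat => d j * x ^ (0 + j)) n). set (X3 := sum_f_R0 (fun j : nat => b j * x ^ (1 + j)) n). set (X4 := sum_f_R0 (fun i : nat => d i * x ^ (0 + i)) n). lazymatch goal with |- ?a = ?b => change (@eq R a b) end. field. }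
    rewrite (is_RInt_unique _ _ _ _ I').
    change (bil (fun i j => Hq (0 + i) (0 + j)) d d n n) with (bil Hq d d n n).
    change (bil (fun i j => Hq (1 + i) (0 + j)) b d n n) with (bil (fun i j => Hq (S i) j) b d n n).
    change (bil (fun i j => Hq (1 + i) (1 + j)) b b n n) with (bil (fun i j => Hq (S i) (S j)) b b n n). lra.
Qed.
Definition mk (l : list (list Q)) (i j : nat) : Q := nth j (nth i l nil) 0%Q.
Definition mk1 (l : list Q) (i : nat) : Q := nth i l 0%Q.

Definition T1 : list (list Q) := [[(1#1)]].
Definition L1 : list (list Q) := [[(1#1)]].
Definition D1 : list Q := [(31#75)].

Lemma check1 : check (mk T1) (mk L1) (mk1 D1) 0 = true.
Proof. vm_compute. reflexivity. Qed.

Definition T2 : list (list Q) := [[(1#1); (1#4)]; [(0#1); (3#4)]].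
Definition L2 : list (list Q) := [[(1#1); (3#4)]; [(0#1); (1#1)]].
Definition D2 : list Q := [(31#75); (99#8000)].

Lemma check2 : check (mk T2) (mk L2) (mk1 D2) 1 = true.
Proof. vm_compute. reflexivity. Qed.

Definition T3 : list (list Q) := [[(-2#3); (-2#3); (-7#15)]; [(25#3); (16#3); (47#15)]; [(-20#3); (-11#3); (-5#3)]].
Definition L3 : list (list Q) := [[(1#1); (1391#1988); (2657#4970)]; [(0#1); (1#1); (1338#991)]; [(0#1); (0#1); (1#1)]].
Definition D3 : list Q := [(497#900); (197209#11928000); (23203#52027500)].

Lemma check3 : check (mk T3) (mk L3) (mk1 D3) 2 = true.
Proof. vm_compute. reflexivity. Qed.

Definition T4 : list (list Q) := [[(1#2); (1#2); (1#2); (25#56)]; [(-9#2); (-15#2); (-15#2); (-363#56)]; [(45#2); (51#2); (45#2); (1017#56)]; [(-35#2); (-35#2); (-29#2); (-89#8)]].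
Definition L4 : list (list Q) := [[(1#1); (522#721); (2013#3605); (9089#20188)]; [(0#1); (1#1); (571#447); (5535#4172)]; [(0#1); (0#1); (1#1); (3195#1684)]; [(0#1); (0#1); (0#1); (1#1)]].
Definition D4 : list Q := [(721#1200); (29651#1442000); (83779#93870000); (109#6062400)].

Lemma check4 : check (mk T4) (mk L4) (mk1 D4) 3 = true.
Proof. vm_compute. reflexivity. Qed.

Definition T5 : list (list Q) := [[(-2#5); (-2#5); (-2#5); (-2#5); (-27#70)]; [(63#5); (48#5); (48#5); (48#5); (643#70)]; [(-252#5); (-237#5); (-252#5); (-252#5); (-238#5)]; [(448#5); (448#5); (463#5); (448#5); (412#5)]; [(-252#5); (-252#5); (-252#5); (-237#5); (-213#5)]].
Definition L5 : list (list Q) := [[(1#1); (549#748); (537#935); (175#374); (1027#2618)]; [(0#1); (1#1); (652#501); (1590#1169); (4660#3507)]; [(0#1); (0#1); (1#1); (2025#1112); (330#139)]; [(0#1); (0#1); (0#1); (1#1); (1248#515)]; [(0#1); (0#1); (0#1); (0#1); (1#1)]].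
Definition D5 : list Q := [(187#300); (33233#1496000); (27661#26302500); (20497#392313600); (241#312283125)].

Lemma check5 : check (mk T5) (mk L5) (mk1 D5) 4 = true.
Proof. vm_compute. reflexivity. Qed.

Definition T6 : list (list Q) := [[(1#3); (1#3); (1#3); (1#3); (1#3); (29#88)]; [(-26#3); (-35#3); (-35#3); (-35#3); (-35#3); (-1013#88)]; [(280#3); (289#3); (280#3); (280#3); (280#3); (1010#11)]; [(-280#1); (-280#1); (-277#1); (-280#1); (-280#1); (-3015#11)]; [(350#1); (350#1); (350#1); (353#1); (350#1); (14925#44)]; [(-154#1); (-154#1); (-154#1); (-154#1); (-151#1); (-579#4)]].
Definition L6 : list (list Q) := [[(1#1); (1691#2288); (833#1430); (547#1144); (404#1001); (30633#88088)]; [(0#1); (1#1); (2088#1591); (15410#11137); (15160#11137); (478550#367521)]; [(0#1); (0#1); (1#1); (6955#3776); (3415#1416); (114855#41536)]; [(0#1); (0#1); (0#1); (1#1); (4664#1985); (1459#397)]; [(0#1); (0#1); (0#1); (0#1); (1#1); (5385#1832)]; [(0#1); (0#1); (0#1); (0#1); (0#1); (1#1)]].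
Definition D6 : list Q := [(143#225); (316609#13728000); (23482#20881875); (79003#1332172800); (45571#14443852500); (41#1197028800)].

Lemma check6 : check (mk T6) (mk L6) (mk1 D6) 5 = true.
Proof. vm_compute. reflexivity. Qed.

Definition T7 : list (list Q) := [[(-2#7); (-2#7); (-2#7); (-2#7); (-2#7); (-2#7); (-285#1001)]; [(117#7); (96#7); (96#7); (96#7); (96#7); (96#7); (1243#91)]; [(-1080#7); (-1059#7); (-1080#7); (-1080#7); (-1080#7); (-1080#7); (-153711#1001)]; [(4800#7); (4800#7); (4821#7); (4800#7); (4800#7); (4800#7); (682425#1001)]; [(-9900#7); (-9900#7); (-9900#7); (-9879#7); (-9900#7); (-9900#7); (-9825#7)]; [(9504#7); (9504#7); (9504#7); (9504#7); (9525#7); (9504#7); (122175#91)]; [(-3432#7); (-3432#7); (-3432#7); (-3432#7); (-3432#7); (-3411#7); (-3357#7)]].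
Definition L7 : list (list Q) := [[(1#1); (28053#37804); (27753#47255); (9151#18902); (3879#9451); (26853#75608); (5062997#16217916)]; [(0#1); (1#1); (35404#26853); (87510#62657); (86510#62657); (213775#161118); (1611449#1279993)]; [(0#1); (0#1); (1#1); (122265#66008); (40255#16502); (278285#99012); (14291445#4719572)]; [(0#1); (0#1); (0#1); (1#1); (87012#36755); (300342#80861); (5136278#1051193)]; [(0#1); (0#1); (0#1); (0#1); (1#1); (30755#10716); (121395#23218)]; [(0#1); (0#1); (0#1); (0#1); (0#1); (1#1); (17082#4951)]; [(0#1); (0#1); (0#1); (0#1); (0#1); (0#1); (1#1)]].
Definition D7 : list Q := [(9451#14700); (1781249#75608000); (1641949#1409782500); (1462849#23287622400); (177707#50942430000); (985249#5097335443200); (29489#19134926811000)].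

Lemma check7 : check (mk T7) (mk L7) (mk1 D7) 6 = true.
Proof. vm_compute. reflexivity. Qed.

Definition T8 : list (list Q) := [[(1#4); (1#4); (1#4); (1#4); (1#4); (1#4); (1#4); (2857#11440)]; [(-51#4); (-63#4); (-63#4); (-63#4); (-63#4); (-63#4); (-63#4); (-179967#11440)]; [(945#4); (957#4); (945#4); (945#4); (945#4); (945#4); (945#4); (539805#2288)]; [(-5775#4); (-5775#4); (-5763#4); (-5775#4); (-5775#4); (-5775#4); (-5775#4); (-299817#208)]; [(17325#4); (17325#4); (17325#4); (17337#4); (17325#4); (17325#4); (17325#4); (899115#208)]; [(-27027#4); (-27027#4); (-27027#4); (-27027#4); (-27015#4); (-27027#4); (-27027#4); (-539133#80)]; [(21021#4); (21021#4); (21021#4); (21021#4); (21021#4); (21033#4); (21021#4); (418803#80)]; [(-6435#4); (-6435#4); (-6435#4); (-6435#4); (-6435#4); (-6435#4); (-6423#4); (-25545#16)]].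
Definition L8 : list (list Q) := [[(1#1); (2313#3109); (9177#15545); (1517#3109); (9027#21763); (1119#3109); (2959#9327); (2517397#8891740)]; [(0#1); (1#1); (2959#2238); (7335#5222); (14545#10444); (18025#13428); (953#746); (1547389#1280136)]; [(0#1); (0#1); (1#1); (5220#2809); (13795#5618); (47845#16854); (94815#30899); (5129299#1606748)]; [(0#1); (0#1); (0#1); (1#1); (7677#3230); (26607#7106); (17563#3553); (84273#14212)]; [(0#1); (0#1); (0#1); (0#1); (1#1); (19985#6927); (158130#30017); (469315#60034)]; [(0#1); (0#1); (0#1); (0#1); (0#1); (1#1); (5877#1736); (34887#4960)]; [(0#1); (0#1); (0#1); (0#1); (0#1); (0#1); (1#1); (25473#6436)]; [(0#1); (0#1); (0#1); (0#1); (0#1); (0#1); (0#1); (1#1)]].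
Definition D8 : list Q := [(3109#4800); (74227#3109000); (558991#469980000); (64277#991015200); (459491#125349840000); (6169#29419661700); (320191#26837594784000); (9281#134241959280000)].

Lemma check8 : check (mk T8) (mk L8) (mk1 D8) 7 = true.
Proof. vm_compute. reflexivity. Qed.

Definition T9 : list (list Q) := [[(-2#9); (-2#9); (-2#9); (-2#9); (-2#9); (-2#9); (-2#9); (-2#9); (-9721#43758)]; [(187#9); (160#9); (160#9); (160#9); (160#9); (160#9); (160#9); (160#9); (777653#43758)]; [(-3080#9); (-3053#9); (-3080#9); (-3080#9); (-3080#9); (-3080#9); (-3080#9); (-3080#9); (-680416#1989)]; [(24640#9); (24640#9); (24667#9); (24640#9); (24640#9); (24640#9); (24640#9); (24640#9); (5443004#1989)]; [(-100100#9); (-100100#9); (-100100#9); (-100073#9); (-100100#9); (-100100#9); (-100100#9); (-100100#9); (-1700797#153)]; [(224224#9); (224224#9); (224224#9); (224224#9); (224251#9); (224224#9); (224224#9); (224224#9); (224077#9)]; [(-280280#9); (-280280#9); (-280280#9); (-280280#9); (-280280#9); (-280253#9); (-280280#9); (-280280#9); (-4760644#153)]; [(183040#9); (183040#9); (183040#9); (183040#9); (183040#9); (183040#9); (183067#9); (183040#9); (3107696#153)]; [(-48620#9); (-48620#9); (-48620#9); (-48620#9); (-48620#9); (-48620#9); (-48620#9); (-48593#9); (-48497#9)]].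
Definition L9 : list (list Q) := [[(1#1); (15719#21092); (15619#26365); (5173#10546); (15419#36911); (15319#42184); (1691#5273); (15119#52730); (6638413#25637326)]; [(0#1); (1#1); (20292#15319); (151190#107233); (150190#107233); (124325#91914); (59276#45957); (206066#168509); (43077470#37240489)]; [(0#1); (0#1); (1#1); (72595#38984); (72095#29238); (55685#19492); (497665#160809); (691831#214412); (77852705#23692526)]; [(0#1); (0#1); (0#1); (1#1); (54476#22865); (17206#4573); (250488#50303); (3915786#653939); (75508188#11116963)]; [(0#1); (0#1); (0#1); (0#1); (1#1); (146055#50476); (869330#164047); (1293495#164047); (29082795#2788799)]; [(0#1); (0#1); (0#1); (0#1); (0#1); (1#1); (89752#26411); (133428#18865); (749472#64141)]; [(0#1); (0#1); (0#1); (0#1); (0#1); (0#1); (1#1); (68033#17456); (168595#18547)]; [(0#1); (0#1); (0#1); (0#1); (0#1); (0#1); (0#1); (1#1); (36240#8119)]; [(0#1); (0#1); (0#1); (0#1); (0#1); (0#1); (0#1); (0#1); (1#1)]].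
Definition D9 : list Q := [(5273#8100); (3048481#126552000); (969727#804247500); (910027#13753555200); (2511181#665508690000); (68257#311820537600); (217109#17012473978500); (1615681#2184581393280000); (2491#820481077458900)].

Lemma check9 : check (mk T9) (mk L9) (mk1 D9) 8 = true.
Proof. vm_compute. reflexivity. Qed.

Definition T10 : list (list Q) := [[(1#5); (1#5); (1#5); (1#5); (1#5); (1#5); (1#5); (1#5); (1#5); (33589#167960)]; [(-84#5); (-99#5); (-99#5); (-99#5); (-99#5); (-99#5); (-99#5); (-99#5); (-99#5); (-3325281#167960)]; [(2376#5); (2391#5); (2376#5); (2376#5); (2376#5); (2376#5); (2376#5); (2376#5); (2376#5); (19951461#41990)]; [(-24024#5); (-24024#5); (-24009#5); (-24024#5); (-24024#5); (-24024#5); (-24024#5); (-24024#5); (-24024#5); (-7758789#1615)]; [(126126#5); (126126#5); (126126#5); (126141#5); (126126#5); (126126#5); (126126#5); (126126#5); (126126#5); (162931419#6460)]; [(-378378#5); (-378378#5); (-378378#5); (-378378#5); (-378363#5); (-378378#5); (-378378#5); (-378378#5); (-378378#5); (-488781027#6460)]; [(672672#5); (672672#5); (672672#5); (672672#5); (672672#5); (672687#5); (672672#5); (672672#5); (672672#5); (217227192#1615)]; [(-700128#5); (-700128#5); (-700128#5); (-700128#5); (-700128#5); (-700128#5); (-700113#5); (-700128#5); (-700128#5); (-13298724#95)]; [(393822#5); (393822#5); (393822#5); (393822#5); (393822#5); (393822#5); (393822#5); (393837#5); (393822#5); (29918079#380)]; [(-92378#5); (-92378#5); (-92378#5); (-92378#5);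 (-92378#5); (-92378#5); (-92378#5); (-92378#5); (-92363#5); (-369209#20)]].
Definition L10 : list (list Q) := [[(1#1); (585#784); (291#490); (193#392); (144#343); (573#1568); (95#294); (81#280); (141#539); (17274695#72424352)]; [(0#1); (1#1); (760#573); (270#191); (1880#1337); (4675#3438); (248#191); (2590#2101); (7360#6303); (19505985#17644198)]; [(0#1); (0#1); (1#1); (2745#1472); (455#184); (6335#2208); (1575#506); (26313#8096); (21805#6578); (226397475#67990208)]; [(0#1); (0#1); (0#1); (1#1); (2088#875); (1038#275); (1376#275); (21546#3575); (4896#715); (43233039#5773625)]; [(0#1); (0#1); (0#1); (0#1); (1#1); (5705#1968); (2835#533); (16905#2132); (5600#533); (8897679#688636)]; [(0#1); (0#1); (0#1); (0#1); (0#1); (1#1); (3600#1057); (5364#755); (1776#151); (829548#48773)]; [(0#1); (0#1); (0#1); (0#1); (0#1); (0#1); (1#1); (8505#2176); (21105#2312); (5838315#351424)]; [(0#1); (0#1); (0#1); (0#1); (0#1); (0#1); (0#1); (1#1); (4720#1071); (25770#2261)]; [(0#1); (0#1); (0#1); (0#1); (0#1); (0#1); (0#1); (0#1); (1#1); (621#125)]; [(0#1); (0#1); (0#1); (0#1); (0#1); (0#1); (0#1); (0#1); (0#1); (1#1)]].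
Definition D10 : list Q := [(49#75); (38009#1568000); (9154#7520625); (199#2967552); (8159#2122312500); (30049#133732684800); (6766#510644759625); (1393#1779880960000); (199#4329278157204); (2069#16291599324000000)].

Lemma check10 : check (mk T10) (mk L10) (mk1 D10) 9 = true.
Proof. vm_compute. reflexivity. Qed.

Definition T11 : list (list Q) := [[(-2#11); (-2#11); (-2#11); (-2#11); (-2#11); (-2#11); (-2#11); (-2#11); (-2#11); (-2#11); (-117569#646646)]; [(273#11); (240#11); (240#11); (240#11); (240#11); (240#11); (240#11); (240#11); (240#11); (240#11); (14108247#646646)]; [(-7020#11); (-6987#11); (-7020#11); (-7020#11); (-7020#11); (-7020#11); (-7020#11); (-7020#11); (-7020#11); (-7020#11); (-31743465#49742)]; [(87360#11); (87360#11); (87393#11); (87360#11); (87360#11); (87360#11); (87360#11); (87360#11); (87360#11); (87360#11); (56432625#7106)]; [(-573300#11); (-573300#11); (-573300#11); (-573267#11); (-573300#11); (-573300#11); (-573300#11); (-573300#11); (-573300#11); (-573300#11); (-185168700#3553)]; [(2201472#11); (2201472#11); (2201472#11); (2201472#11); (2201505#11); (2201472#11); (2201472#11); (2201472#11); (2201472#11); (2201472#11); (711043452#3553)]; [(-5197920#11); (-5197920#11); (-5197920#11); (-5197920#11); (-5197920#11); (-5197887#11); (-5197920#11); (-5197920#11); (-5197920#11); (-5197920#11); (-98755188#209)]; [(7637760#11); (7637760#11); (7637760#11); (7637760#11); (7637760#11); (7637760#11); (7637793#11); (7637760#11); (7637760#11); (7637760#11); (1015754580#1463)]; [(-6802380#11);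 (-6802380#11); (-6802380#11); (-6802380#11); (-6802380#11); (-6802380#11); (-6802380#11); (-6802347#11); (-6802380#11); (-6802380#11); (-47612475#77)]; [(3359200#11); (3359200#11); (3359200#11); (3359200#11); (3359200#11); (3359200#11); (3359200#11); (3359200#11); (3359233#11); (3359200#11); (23511325#77)]; [(-705432#11); (-705432#11); (-705432#11); (-705432#11); (-705432#11); (-705432#11); (-705432#11); (-705432#11); (-705432#11); (-705399#11); (-705249#11)]].
Definition L11 : list (list Q) := [[(1#1); (71037#95116); (70737#118895); (23479#47558); (70137#166453); (69837#190232); (23179#71337); (9891#33970); (6267#23779); (22879#95116); (1105617#5001332)]; [(0#1); (1#1); (92716#69837); (32970#23279); (229790#162953); (571975#419022); (30372#23279); (317506#256069); (903160#768207); (337185#302627); (722841825#684239647)]; [(0#1); (0#1); (1#1); (337185#180632); (111895#45158); (779765#270948); (776265#248369); (3245613#993476); (10769710#3228797); (75735#22579); (1266231435#379236884)]; [(0#1); (0#1); (0#1); (1#1); (258948#108395); (128874#34067); (171032#34067); (2681154#442871); (3049776#442871); (1517688#201305); (731831886#91030121)]; [(0#1); (0#1); (0#1); (0#1); (1#1); (716765#246948); (1426530#267527); (2129295#267527); (2825060#267527); (13914747#1070108); (2630639055#172822442)]; [(0#1); (0#1); (0#1); (0#1); (0#1); (1#1); (460296#134953); (686844#96395); (227748#19279); (5607063#327743); (989057322#43589819)]; [(0#1); (0#1); (0#1); (0#1); (0#1); (0#1); (1#1); (1113777#284464); (5537385#604486); (20188245#1208972); (602194725#22970468)]; [(0#1);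 (0#1); (0#1); (0#1); (0#1); (0#1); (0#1); (1#1); (639160#144711); (3493380#305501); (48604820#2138507)]; [(0#1); (0#1); (0#1); (0#1); (0#1); (0#1); (0#1); (0#1); (1#1); (126711#25780); (251847#18046)]; [(0#1); (0#1); (0#1); (0#1); (0#1); (0#1); (0#1); (0#1); (0#1); (1#1); (66090#12079)]; [(0#1); (0#1); (0#1); (0#1); (0#1); (0#1); (0#1); (0#1); (0#1); (0#1); (1#1)]].
Definition D11 : list Q := [(23779#36300); (4632521#190232000); (4493221#3666442500); (616303#9103852800); (4095221#1051648290000); (295117#1290846585600); (3538021#260787293266500); (3199721#3955562948480000); (256511#5317835255132400); (2403721#839994861145440000); (723#150869441646523600)].

Lemma check11 : check (mk T11) (mk L11) (mk1 D11) 10 = true.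
Proof. vm_compute. reflexivity. Qed.

Definition T12 : list (list Q) := [[(1#6); (1#6); (1#6); (1#6); (1#6); (1#6); (1#6); (1#6); (1#6); (1#6); (1#6); (416021#2496144)]; [(-125#6); (-143#6); (-143#6); (-143#6); (-143#6); (-143#6); (-143#6); (-143#6); (-143#6); (-143#6); (-143#6); (-59490967#2496144)]; [(5005#6); (5023#6); (5005#6); (5005#6); (5005#6); (5005#6); (5005#6); (5005#6); (5005#6); (5005#6); (5005#6); (297454619#356592)]; [(-25025#2); (-25025#2); (-25019#2); (-25025#2); (-25025#2); (-25025#2); (-25025#2); (-25025#2); (-25025#2); (-25025#2); (-25025#2); (-87486575#6992)]; [(100100#1); (100100#1); (100100#1); (100103#1); (100100#1); (100100#1); (100100#1); (100100#1); (100100#1); (100100#1); (100100#1); (78277375#782)]; [(-476476#1); (-476476#1); (-476476#1); (-476476#1); (-476473#1); (-476476#1); (-476476#1); (-476476#1); (-476476#1); (-476476#1); (-476476#1); (-416435041#874)]; [(1429428#1); (1429428#1); (1429428#1); (1429428#1); (1429428#1); (1429431#1); (1429428#1); (1429428#1); (1429428#1); (1429428#1); (1429428#1); (1249302747#874)]; [(-2771340#1); (-2771340#1); (-2771340#1); (-2771340#1); (-2771340#1); (-2771340#1); (-2771337#1); (-2771340#1); (-2771340#1); (-2771340#1); (-2771340#1); (-892356729#322)]; [(3464175#1); (3464175#1); (3464175#1); (3464175#1); (3464175#1); (3464175#1); (3464175#1); (3464178#1); (3464175#1); (3464175#1); (3464175#1); (4461765825#1288)]; [(-8083075#3); (-8083075#3);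 (-8083075#3); (-8083075#3); (-8083075#3); (-8083075#3); (-8083075#3); (-8083075#3); (-8083066#3); (-8083075#3); (-8083075#3); (-1487245375#552)]; [(3556553#3); (3556553#3); (3556553#3); (3556553#3); (3556553#3); (3556553#3); (3556553#3); (3556553#3); (3556553#3); (3556562#3); (3556553#3); (654379253#552)]; [(-676039#3); (-676039#3); (-676039#3); (-676039#3); (-676039#3); (-676039#3); (-676039#3); (-676039#3); (-676039#3); (-676039#3); (-676030#3); (-5407877#24)]].
Definition L12 : list (list Q) := [[(1#1); (1766#2363); (7039#11815); (1169#2363); (6989#16541); (1741#4726); (771#2363); (3457#11815); (6889#25993); (572#2363); (6839#30719); (2632302787#12779841256)]; [(0#1); (1#1); (2313#1741); (17285#12187); (34445#24374); (7150#5223); (6839#5223); (23849#19151); (22630#19151); (25365#22633); (168475#158431); (9510130719#9415871192)]; [(0#1); (0#1); (1#1); (8455#4526); (33695#13578); (13055#4526); (234115#74679); (81634#24893); (1084370#323609); (99210#29419); (98835#29419); (5811038465#1748430008)]; [(0#1); (0#1); (0#1); (1#1); (6539#2735); (22799#6017); (30282#6017); (475104#78221); (540876#78221); (269388#35555); (57501#7111); (1789617483#211310476)]; [(0#1); (0#1); (0#1); (0#1); (1#1); (18270#6289); (436730#81757); (50190#6289); (866460#81757); (1067913#81757); (21271635#1389869); (42027709515#2429491012)]; [(0#1); (0#1); (0#1); (0#1); (0#1); (1#1); (11878#3479); (17742#2485); (5889#497); (145134#8449); (192687#8449); (2944828359#103381964)]; [(0#1); (0#1); (0#1); (0#1); (0#1);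 (0#1); (1#1); (9737#2484); (193865#21114); (353815#21114); (10566325#401166); (1383778517#36907272)]; [(0#1); (0#1); (0#1); (0#1); (0#1); (0#1); (0#1); (1#1); (5710#1291); (281270#24529); (559790#24529); (305354885#7898338)]; [(0#1); (0#1); (0#1); (0#1); (0#1); (0#1); (0#1); (0#1); (1#1); (12826#2605); (51029#3647); (10117789#335524)]; [(0#1); (0#1); (0#1); (0#1); (0#1); (0#1); (0#1); (0#1); (0#1); (1#1); (20695#3817); (535195#31924)]; [(0#1); (0#1); (0#1); (0#1); (0#1); (0#1); (0#1); (0#1); (0#1); (0#1); (1#1); (85767#14356)]; [(0#1); (0#1); (0#1); (0#1); (0#1); (0#1); (0#1); (0#1); (0#1); (0#1); (0#1); (1#1)]].
Definition D12 : list Q := [(2363#3600); (346459#14178000); (450337#365610000); (108853#1596772800); (1251511#318419640000); (98903#427360190400); (13731#995988994000); (256909#310867333920000); (103679#2087431596993600); (69053#23148881584920000); (714211#4004716229509195200); (8389#60564040993878240000)].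

Lemma check12 : check (mk T12) (mk L12) (mk1 D12) 11 = true.
Proof. vm_compute. reflexivity. Qed.

Definition T13 : list (list Q) := [[(-2#13); (-2#13); (-2#13); (-2#13); (-2#13); (-2#13); (-2#13); (-2#13); (-2#13); (-2#13); (-2#13); (-2#13); (-1485797#9657700)]; [(375#13); (336#13); (336#13); (336#13); (336#13); (336#13); (336#13); (336#13); (336#13); (336#13); (336#13); (336#13); (249613857#9657700)]; [(-13860#13); (-13821#13); (-13860#13); (-13860#13); (-13860#13); (-13860#13); (-13860#13); (-13860#13); (-13860#13); (-13860#13); (-13860#13); (-13860#13); (-102965697#96577)]; [(246400#13); (246400#13); (246439#13); (246400#13); (246400#13); (246400#13); (246400#13); (246400#13); (246400#13); (246400#13); (246400#13); (246400#13); (9152504372#482885)]; [(-2356200#13); (-2356200#13); (-2356200#13); (-2356161#13); (-2356200#13); (-2356200#13); (-2356200#13); (-2356200#13); (-2356200#13); (-2356200#13); (-2356200#13); (-2356200#13); (-1029656463#5681)]; [(13571712#13); (13571712#13); (13571712#13); (13571712#13); (13571751#13); (13571712#13); (13571712#13); (13571712#13); (13571712#13); (13571712#13); (13571712#13); (13571712#13); (148270480479#142025)]; [(-50139936#13); (-50139936#13); (-50139936#13); (-50139936#13); (-50139936#13); (-50139897#13); (-50139936#13); (-50139936#13); (-50139936#13); (-50139936#13); (-50139936#13); (-50139936#13); (-28830358656#7475)]; [(122791680#13); (122791680#13); (122791680#13); (122791680#13); (122791680#13); (122791680#13); (122791719#13); (122791680#13); (122791680#13); (122791680#13); (122791680#13);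 (122791680#13); (2824196760#299)]; [(-201455100#13); (-201455100#13); (-201455100#13); (-201455100#13); (-201455100#13); (-201455100#13); (-201455100#13); (-201455061#13); (-201455100#13); (-201455100#13); (-201455100#13); (-201455100#13); (-46334440449#2990)]; [(218864800#13); (218864800#13); (218864800#13); (218864800#13); (218864800#13); (218864800#13); (218864800#13); (218864800#13); (218864839#13); (218864800#13); (218864800#13); (218864800#13); (10067718001#598)]; [(-151016712#13); (-151016712#13); (-151016712#13); (-151016712#13); (-151016712#13); (-151016712#13); (-151016712#13); (-151016712#13); (-151016712#13); (-151016673#13); (-151016712#13); (-151016712#13); (-3775386582#325)]; [(59907456#13); (59907456#13); (59907456#13); (59907456#13); (59907456#13); (59907456#13); (59907456#13); (59907456#13); (59907456#13); (59907456#13); (59907495#13); (59907456#13); (1497667932#325)]; [(-10400600#13); (-10400600#13); (-10400600#13); (-10400600#13); (-10400600#13); (-10400600#13); (-10400600#13); (-10400600#13); (-10400600#13); (-10400600#13); (-10400600#13); (-10400561#13); (-10400345#13)]].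
Definition L13 : list (list Q) := [[(1#1); (99693#133324); (99393#166655); (33031#66662); (98793#233317); (98493#266648); (32731#99993); (97893#333310); (97593#366641); (32431#133324); (7461#33331); (96693#466634); (6683633617#34666239860)]; [(0#1); (1#1); (130924#98493); (326310#229817); (325310#229817); (810775#590958); (43108#32831); (451234#361141); (116840#98493); (480465#426803); (3193100#2987621); (700282#689451); (1650107208#1707310493)]; [(0#1); (0#1); (1#1); (480465#257048); (159655#64262); (1114085#385572); (1110585#353441); (4649757#1413764); (15450190#4594733); (1414395#417703); (1409895#417703); (156155#46736); (1571290551#477402398)]; [(0#1); (0#1); (0#1); (1#1); (373572#156155); (118482#31231); (1732136#343541); (27192942#4466033); (30976848#4466033); (15438024#2030015); (3297348#406003); (9038007#1061854); (2041215692#232015099)]; [(0#1); (0#1); (0#1); (0#1); (1#1); (1051085#361572); (2095170#391703); (3132255#391703); (320180#30131); (20534283#1566812); (102324915#6658951); (17805755#1024454); (4285479330#223843199)]; [(0#1); (0#1); (0#1); (0#1); (0#1); (1#1); (689544#201817); (1030716#144155); (342372#28831); (767637#44557); (1019916#44557); (24222198#846583); (23315763978#681499315)]; [(0#1); (0#1); (0#1); (0#1); (0#1); (0#1); (1#1); (1715553#437296); (8546265#929254); (31220805#1858508); (466579575#17655826); (2658925269#70623304); (40618254963#812167996)]; [(0#1); (0#1); (0#1); (0#1); (0#1); (0#1); (0#1); (1#1); (1021240#230679); (5594820#486989); (11145640#486989); (396883630#10226769); (4628736684#78405229)]; [(0#1); (0#1); (0#1); (0#1); (0#1); (0#1); (0#1);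 (0#1); (1#1); (2339469#474620); (2329569#166117); (10051899#332234); (420381819#7641382)]; [(0#1); (0#1); (0#1); (0#1); (0#1); (0#1); (0#1); (0#1); (0#1); (1#1); (1291860#237941); (8358090#497513); (19412380#497513)]; [(0#1); (0#1); (0#1); (0#1); (0#1); (0#1); (0#1); (0#1); (0#1); (0#1); (1#1); (211541#35688); (736956#37175)]; [(0#1); (0#1); (0#1); (0#1); (0#1); (0#1); (0#1); (0#1); (0#1); (0#1); (0#1); (1#1); (109008#16831)]; [(0#1); (0#1); (0#1); (0#1); (0#1); (0#1); (0#1); (0#1); (0#1); (0#1); (0#1); (0#1); (1#1)]].
Definition D13 : list Q := [(33331#50700); (6533369#266648000); (6394069#5170882500); (6214969#90686534400); (5996069#1515015810000); (521579#2233647187200); (5438869#389997326218500); (5100569#6080740814720000); (248551#4907727927788400); (4304569#1405876158392160000); (295913#1600273715371931600); (3349369#301115839368839040000); (11#40755644575615125000)].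

Lemma check13 : check (mk T13) (mk L13) (mk1 D13) 12 = true.
Proof. vm_compute. reflexivity. Qed.


Lemma ref_fun M : (1 <= M <= 13)%nat -> forall p, poly_le M p -> p 0 = 0 ->
  exists q, poly_le (M - 1) q /\ q 1 = p 1 /\ 0 <= RInt (Floc p q) 0 1.
Proof.
  intros HM. destruct M as [|n]; [lia|]. replace (S n - 1)%nat with n by lia.
  destruct n; [exact (ref_fun_gen _ _ _ _ check1)|].
  destruct n; [exact (ref_fun_gen _ _ _ _ check2)|].
  destruct n; [exact (ref_fun_gen _ _ _ _ check3)|].
  destruct n; [exact (ref_fun_gen _ _ _ _ check4)|].
  destruct n; [exact (ref_fun_gen _ _ _ _ check5)|].
  destruct n; [exact (ref_fun_gen _ _ _ _ check6)|].
  destruct n; [exact (ref_fun_gen _ _ _ _ check7)|].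
  destruct n; [exact (ref_fun_gen _ _ _ _ check8)|].
  destruct n; [exact (ref_fun_gen _ _ _ _ check9)|].
  destruct n; [exact (ref_fun_gen _ _ _ _ check10)|].
  destruct n; [exact (ref_fun_gen _ _ _ _ check11)|].
  destruct n; [exact (ref_fun_gen _ _ _ _ check12)|].
  destruct n; [exact (ref_fun_gen _ _ _ _ check13)|].
  lia.
Qed.

Lemma cont_pow2 f x : continuity_pt f x -> continuity_pt (fun t => f t ^ 2) x.
Proof.
  intros H. apply continuity_pt_ext with (fun t => f t * f t). intros; ring.
  apply cont_mult; auto.
Qed.
Lemma cont_divc f c x : continuity_pt f x -> continuity_pt (fun t => f t / c) x.
Proof.
  intros H. apply continuity_pt_ext with (fun t => f t * / c). intros; reflexivity.
  apply cont_mult; auto using cont_const.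
Qed.

Lemma cont_Floc p q : (forall t, continuity_pt p t) -> (forall t, continuity_pt q t) ->
  forall t, continuity_pt (Floc p q) t.
Proof.
  intros Hp Hq t. unfold Floc.
  apply cont_minus; [apply cont_minus|].
  - apply cont_mult; auto.
  - apply cont_divc, cont_pow2, cont_minus; auto.
  - apply cont_divc, cont_pow2; auto.
Qed.

Lemma exRI_cont f a b : (forall t, continuity_pt f t) -> ex_RInt f a b.
Proof.
  intros H; apply (@ex_RInt_continuous R_CompleteNormedModule); intros z _; apply continuity_pt_filterlim, H.
Qed.

Lemma loc_gen M u v p : (1 <= M <= 13)%nat -> u <> v -> poly_le M p -> p u = 0 ->
  exists q, poly_le (M - 1) q /\ q v = p v /\
    exists X, 0 <= X /\ RInt (Floc p q) u v = (v - u) * X.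
Proof.
  intros HM Huv Hp Hpu.
  set (w := v - u). assert (Hw : w <> 0) by (unfold w; lra).
  set (ph := fun s => p (w * s + u)).
  assert (Hph : poly_le M ph) by (apply poly_le_comp; auto).
  assert (Hph0 : ph 0 = 0) by (unfold ph; rewrite Rmult_0_r, Rplus_0_l; auto).
  destruct (ref_fun M HM ph Hph Hph0) as [qh [Hqh [Hqh1 Hint]]].
  exists (fun t => qh (/ w * t + (- u / w))). split; [|split].
  - apply poly_le_comp; auto.
  - cbv beta. replace (/ w * v + - u / w) with 1 by (unfold w in *; field; auto).
    rewrite Hqh1. unfold ph. f_equal. unfold w; ring.
  - exists (RInt (Floc ph qh) 0 1). split; auto.
    assert (Hcp : forall t, continuity_pt p t) by (intros; eapply poly_cont; eauto).
    assert (Hcq : forall t, continuity_pt (fun t => qh (/ w * t + (- u / w))) t).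
    { intros; eapply poly_cont. apply poly_le_comp; eauto. }
    assert (Hex := exRI_cont (Floc p (fun t => qh (/ w * t + (- u / w)))) (w * 0 + u) (w * 1 + u)
                     (cont_Floc _ _ Hcp Hcq)).
    assert (Hc := RInt_comp_lin _ w u 0 1 Hex).
    replace (w * 0 + u) with u in Hc by ring.
    replace (w * 1 + u) with v in Hc by (unfold w; ring).
    rewrite <- Hc.
    assert (Hcph : forall t, continuity_pt ph t) by (intros; eapply poly_cont; eauto).
    assert (Hcqh : forall t, continuity_pt qh t) by (intros; eapply poly_cont; eauto).
    transitivity (scal w (RInt (Floc ph qh) 0 1)); [|reflexivity].
    rewrite <- (RInt_scal (Floc ph qh) 0 1 w (exRI_cont _ _ _ (cont_Floc _ _ Hcph Hcqh))).
    apply RInt_ext. intros x _. unfold scal; simpl; unfold mult; simpl. f_equal.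
    unfold Floc, ph. replace (/ w * (w * x + u) + - u / w) with x by (field; auto).
    reflexivity.
Qed.

Definition paste (g1 g2 : R -> R) (v : R) (t : R) : R :=
  if Rle_dec t v then g1 t else g2 t.

Lemma paste_cont g1 g2 v : (forall t, continuity_pt g1 t) -> (forall t, continuity_pt g2 t) ->
  g1 v = g2 v -> forall t, continuity_pt (paste g1 g2 v) t.
Proof.
  intros H1 H2 E t.
  destruct (Rtotal_order t v) as [Hlt|[Heq|Hgt]].
  - apply continuity_pt_locally_ext with (f := g1) (a := v - t); [lra| |apply H1].
    intros y Hy. unfold paste. destruct (Rle_dec y v); [reflexivity|]. exfalso.
    unfold Rdist in Hy. apply Rabs_def2 in Hy. lra.
  - subst t. specialize (H1 v); specialize (H2 v).
    unfold continuity_pt, continue_in, limit1_in, limit_in in *.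
    intros eps Heps. destruct (H1 eps Heps) as [a1 [Ha1 Ha1']].
    destruct (H2 eps Heps) as [a2 [Ha2 Ha2']].
    exists (Rmin a1 a2). split; [apply Rmin_pos; auto|].
    intros x [Dx Hx]. unfold paste. destruct (Rle_dec v v) as [_|n]; [|lra].
    destruct (Rle_dec x v).
    + apply Ha1'. split; auto. eapply Rlt_le_trans; [exact Hx|apply Rmin_l].
    + rewrite E. apply Ha2'. split; auto. eapply Rlt_le_trans; [exact Hx|apply Rmin_r].
  - apply continuity_pt_locally_ext with (f := g2) (a := t - v); [lra| |apply H2].
    intros y Hy. unfold paste. destruct (Rle_dec y v); [|reflexivity]. exfalso.
    unfold Rdist in Hy. apply Rabs_def2 in Hy. lra.
Qed.

Definition CE (L : R) (f : R -> R) : Prop :=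
  exists g, (forall t, continuity_pt g t) /\ forall t, 0 <= t <= L -> f t = g t.

Lemma CE_ex L f a b : CE L f -> 0 <= a -> a <= b -> b <= L -> ex_RInt f a b.
Proof.
  intros [g [Hg Hf]] Ha Hab Hb.
  apply ex_RInt_ext with g.
  - intros x Hx. rewrite Rmin_left, Rmax_right in Hx by lra. symmetry; apply Hf; lra.
  - apply exRI_cont; auto.
Qed.

Lemma CE_plus L f g : CE L f -> CE L g -> CE L (fun t => f t + g t).
Proof.
  intros [f' [Hf Ef]] [g' [Hg Eg]]. exists (fun t => f' t + g' t); split.
  intros; apply cont_plus; auto. intros t Ht; rewrite Ef, Eg; auto.
Qed.
Lemma CE_minus L f g : CE L f -> CE L g -> CE L (fun t => f t - g t).
Proof.
  intros [f' [Hf Ef]] [g' [Hg Eg]]. exists (fun t => f' t - g' t); split.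
  intros; apply cont_minus; auto. intros t Ht; rewrite Ef, Eg; auto.
Qed.
Lemma CE_mult L f g : CE L f -> CE L g -> CE L (fun t => f t * g t).
Proof.
  intros [f' [Hf Ef]] [g' [Hg Eg]]. exists (fun t => f' t * g' t); split.
  intros; apply cont_mult; auto. intros t Ht; rewrite Ef, Eg; auto.
Qed.
Lemma CE_const L c : CE L (fun _ => c).
Proof. exists (fun _ => c); split; auto. intros; apply cont_const. Qed.
Lemma CE_pow2 L f : CE L f -> CE L (fun t => f t ^ 2).
Proof.
  intros [f' [Hf Ef]]. exists (fun t => f' t ^ 2); split.
  intros; apply cont_pow2; auto. intros t Ht; rewrite Ef; auto.
Qed.
Lemma CE_divc L f c : CE L f -> CE L (fun t => f t / c).
Proof.
  intros [f' [Hf Ef]]. exists (fun t => f' t / c); split.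
  intros; apply cont_divc; auto. intros t Ht; rewrite Ef; auto.
Qed.
Lemma CE_Floc L f g : CE L f -> CE L g -> CE L (Floc f g).
Proof.
  intros Hf Hg. unfold Floc.
  apply CE_minus; [apply CE_minus|]; [apply CE_mult; auto| |];
  apply CE_divc, CE_pow2; auto. apply CE_minus; auto.
Qed.

Lemma mesh_mono L kappa h n x : 0 < kappa -> 0 < h -> mesh1d L kappa h n x ->
  forall i j, (i <= j)%nat -> (j <= n)%nat -> x i <= x j.
Proof.
  intros Hk Hh [_ [_ [_ Hm]]] i j Hij. induction Hij; intros Hj.
  - lra.
  - assert (x m <= x (S m)).
    { destruct (Hm m) as [Ha _]; [lia|]. assert (0 < kappa * h) by (apply Rmult_lt_0_compat; auto). lra. }
    assert (x i <= x m) by (apply IHHij; lia). lra.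
Qed.

Lemma Ytr_CE M L kappa h n x f : 0 < kappa -> 0 < h -> mesh1d L kappa h n x ->
  Ytr M n x f -> CE L f.
Proof.
  intros Hk Hh Hmesh Hy.
  assert (Hmono := mesh_mono _ _ _ _ _ Hk Hh Hmesh).
  destruct Hmesh as [Hn [H0 [HL Hm]]].
  assert (C : forall m, (m <= n)%nat -> exists g, (forall t, continuity_pt g t) /\
                 forall t, x O <= t <= x m -> f t = g t).
  { induction m; intros Hmn.
    - exists (fun _ => f (x O)); split; [intros; apply cont_const|].
      intros t Ht. replace t with (x O) by lra. reflexivity.
    - destruct IHm as [g [Hg Eg]]; [lia|].
      destruct (Hy m) as [p [Hp Ep]]; [lia|].
      assert (Hxm : x O <= x m) by (apply Hmono; lia).
      assert (Hxs : x m <= x (S m)) by (apply Hmono; lia).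
      exists (paste g p (x m)); split.
      + apply paste_cont; auto. intros; eapply poly_cont; eauto.
        rewrite <- Eg, Ep; lra.
      + intros t Ht. unfold paste. destruct (Rle_dec t (x m)).
        * apply Eg; lra.
        * apply Ep; lra. }
  destruct (C n (le_n n)) as [g [Hg Eg]]. exists g; split; auto.
  intros t Ht; apply Eg; rewrite H0, HL; auto.
Qed.

Lemma RI_minus f g a b : ex_RInt f a b -> ex_RInt g a b ->
  RInt (fun x => f x - g x) a b = RInt f a b - RInt g a b.
Proof. intros; exact (RInt_minus f g a b H H0). Qed.
Lemma RI_plus f g a b : ex_RInt f a b -> ex_RInt g a b ->
  RInt (fun x => f x + g x) a b = RInt f a b + RInt g a b.
Proof. intros; exact (RInt_plus f g a b H H0). Qed.
Lemma RI_scal f a b k : ex_RInt f a b -> RInt (fun x => k * f x) a b = k * RInt f a b.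
Proof. intros; exact (RInt_scal f a b k H). Qed.
Lemma RI_ge0 f a b : a <= b -> ex_RInt f a b -> (forall x, a < x < b -> 0 <= f x) -> 0 <= RInt f a b.
Proof.
  intros Hab Hf H.
  assert (E : RInt (fun _ => 0) a b = 0).
  { rewrite RInt_const. unfold scal; simpl; unfold mult; simpl; ring. }
  rewrite <- E. apply RInt_le; auto. apply ex_RInt_const.
Qed.

Ltac ce := repeat match goal with
 | |- CE _ (Floc _ _) => apply CE_Floc
 | |- CE _ (fun t => Floc ?f ?g t) => apply (CE_Floc _ f g)
 | |- CE _ (fun t => @?a t + @?b t) => apply (CE_plus _ a b)
 | |- CE _ (fun t => @?a t - @?b t) => apply (CE_minus _ a b)
 | |- CE _ (fun t => @?a t * @?b t) => apply (CE_mult _ a b)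
 | |- CE _ (fun t => @?a t ^ 2) => apply (CE_pow2 _ a)
 | |- CE _ (fun t => @?a t / ?c) => apply (CE_divc _ a c)
 | |- CE _ _ => first [eassumption | apply CE_const]
 end.
Ltac exri := eapply CE_ex; [ce | lra | lra | lra].

Lemma core  L E P psi : 0 < L -> CE L E -> CE L P -> CE L psi ->
  RInt (fun t => (E t - P t) * P t) 0 L = 0 ->
  0 <= RInt (Floc E psi) 0 L ->
  L2ip L (fun t => E t + P t) psi >= 1/100 * (L2norm L E)^2 /\
  L2norm L psi <= 6 * L2norm L E.
Proof.
  intros HL HE HP Hpsi Horth Hloc.
  assert (HEE : 0 <= RInt (fun t => E t * E t) 0 L).
  { apply RI_ge0; [lra|exri|]. intros; apply Rle_0_sqr. }
  unfold L2norm, L2ip. split.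
  - rewrite pow2_sqrt by auto.
    assert (h1 : RInt (fun t => (E t + P t) * psi t) 0 L =
                 RInt (fun t => (E t + P t) * psi t - (E t - P t) * P t) 0 L).
    { rewrite RI_minus by exri. rewrite Horth. symmetry; apply Rminus_0_r. }
    assert (h2 : RInt (fun t => Floc E psi t + 1/100 * (E t * E t)) 0 L <=
                 RInt (fun t => (E t + P t) * psi t - (E t - P t) * P t) 0 L).
    { apply RInt_le; [lra|exri|exri|]. intros t _. unfold Floc.
      assert (0 <= (P t + (psi t - E t)/2)^2) by apply pow2_ge_0. nra. }
    rewrite RI_plus, RI_scal in h2 by exri.
    apply Rle_ge. lra.
  - rewrite <- (sqrt_square 6) by lra. rewrite <- sqrt_mult_alt by lra.
    apply sqrt_le_1_alt.
    assert (h : RInt (fun t => psi t * psi t) 0 L <=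
                RInt (fun t => 36 * (E t * E t) - 8 * Floc E psi t) 0 L).
    { apply RInt_le; [lra|exri|exri|]. intros t _. unfold Floc.
      assert (0 <= (psi t - 6 * E t)^2) by apply pow2_ge_0.
      assert (0 <= E t * E t) by apply Rle_0_sqr. nra. }
    rewrite RI_minus, !RI_scal in h by exri. lra.
Qed.

Lemma RI_chasles (f : R -> R) a b c : ex_RInt f a b -> ex_RInt f b c ->
  RInt f a b + RInt f b c = RInt f a c.
Proof. intros; exact (RInt_Chasles f a b c H H0). Qed.

Lemma RI_swap (f : R -> R) a b : ex_RInt f a b -> RInt f b a = - RInt f a b.
Proof. intros H; rewrite <- (opp_RInt_swap f a b H). reflexivity. Qed.

Lemma RI_ext_on (f g : R -> R) a b : a <= b -> (forall x, a < x < b -> f x = g x) -> RInt f a b = RInt g a b.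
Proof.
  intros Hab H; apply RInt_ext; intros x Hx.
  rewrite Rmin_left, Rmax_right in Hx by lra. apply H; auto.
Qed.

Lemma key M L kappa h n x eta : (1 <= M <= 13)%nat -> 0 < L -> 0 < kappa -> 0 < h ->
  mesh1d L kappa h n x -> Ytr M n x eta -> eta 0 = 0 -> eta L = 0 ->
  exists psi, Wtil M n x psi /\ CE L psi /\ 0 <= RInt (Floc eta psi) 0 L.
Proof.
  intros HM HL Hk Hh Hmesh Hy He0 HeL.
  assert (Hmono := mesh_mono _ _ _ _ _ Hk Hh Hmesh).
  assert (HCE := Ytr_CE _ _ _ _ _ _ _ Hk Hh Hmesh Hy).
  destruct Hmesh as [Hn [Hx0 [HxL Hm]]].
  assert (Hkh : 0 < kappa * h) by (apply Rmult_lt_0_compat; auto).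
  destruct (Hy O) as [p0 [Hp0 Ep0]]; [lia|].
  set (a := x 1%nat) in *.
  assert (Ha : 0 < a) by (destruct (Hm O) as [H1 _]; [lia|]; unfold a; lra).
  assert (Hp00 : p0 0 = 0) by (rewrite <- Ep0; [auto|]; rewrite Hx0; lra).
  assert (HaL : a <= L) by (rewrite <- HxL; apply Hmono; lia).
  destruct (Nat.eq_dec n 1) as [Hn1|Hn1].
  -
    subst n. assert (HaL' : a = L) by (unfold a; rewrite <- HxL; reflexivity).
    destruct (loc_gen M 0 L p0 HM ltac:(lra) Hp0 Hp00) as [q0 [Hq0 [Hq0L [X [HX HI]]]]].
    exists q0. split; [|split].
    + split; [|split].
      * intros i Hi. assert (i = O) by lia. subst i.
        exists q0; split; [apply (poly_le_mono (M - 1)); [lia|auto]|auto].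
      * exists q0; split; auto.
      * exists q0; split; auto.
    + exists q0; split; [intros; eapply poly_cont; eauto|auto].
    + rewrite (RI_ext_on _ (Floc p0 q0)); [rewrite HI; apply Rmult_le_pos; lra|lra|].
      intros t Ht. unfold Floc. rewrite Ep0; auto. rewrite Hx0; fold a; lra.
  - set (b := x (pred n)) in *.
    destruct (Hy (pred n)) as [p1 [Hp1 Ep1]]; [lia|].
    replace (S (pred n)) with n in Ep1 by lia. rewrite HxL in Ep1. fold b in Ep1.
    assert (Hab : a <= b) by (apply Hmono; lia).
    assert (HbL : b < L).
    { destruct (Hm (pred n)) as [H1 _]; [lia|]. replace (S (pred n)) with n in H1 by lia.
      fold b in H1. lra. }
    assert (Hp1L : p1 L = 0) by (rewrite <- Ep1; [auto|lra]).
    assert (Hea : eta a = p0 a) by (apply Ep0; rewrite Hx0; fold a; lra).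
    assert (Heb : eta b = p1 b) by (apply Ep1; fold b; lra).
    destruct (loc_gen M 0 a p0 HM ltac:(lra) Hp0 Hp00) as [q0 [Hq0 [Hq0a [X0 [HX0 HI0]]]]].
    destruct (loc_gen M L b p1 HM ltac:(lra) Hp1 Hp1L) as [q1 [Hq1 [Hq1b [X1 [HX1 HI1]]]]].
    set (psi := paste (paste q0 eta a) q1 b).
    assert (Pl : forall t, t <= a -> psi t = q0 t).
    { intros t Ht; unfold psi, paste. destruct (Rle_dec t b); [|lra].
      destruct (Rle_dec t a); [reflexivity|lra]. }
    assert (Pm : forall t, a <= t <= b -> psi t = eta t).
    { intros t Ht; unfold psi, paste. destruct (Rle_dec t b); [|lra].
      destruct (Rle_dec t a); [|reflexivity]. replace t with a by lra. rewrite Hea; auto. }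
    assert (Pr : forall t, b <= t -> psi t = q1 t).
    { intros t Ht; unfold psi, paste. destruct (Rle_dec t b); [|reflexivity].
      replace t with b by lra. destruct (Rle_dec b a).
      - replace b with a by lra. rewrite Hq0a, <- Hea. replace a with b by lra.
        rewrite Heb; auto.
      - rewrite Heb; auto. }
    exists psi. split; [|split].
    + split; [|split].
      * intros i Hi. destruct (Nat.eq_dec i O) as [->|Hi0].
        { exists q0; split; [apply (poly_le_mono (M - 1)); [lia|auto]|].
          intros t Ht. apply Pl. fold a in Ht. lra. }
        destruct (Nat.eq_dec i (pred n)) as [->|Hin].
        { exists q1; split; [apply (poly_le_mono (M - 1)); [lia|auto]|].
          intros t Ht. apply Pr. fold b in Ht. lra. }
        destruct (Hy i Hi) as [pi [Hpi Epi]]. exists pi; split; auto.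
        intros t Ht. assert (a <= x i) by (apply Hmono; lia).
        assert (x (S i) <= b) by (apply Hmono; lia).
        rewrite Pm by lra. apply Epi; auto.
      * exists q0; split; auto. intros t Ht. apply Pl. fold a in Ht. lra.
      * exists q1; split; auto. intros t Ht. apply Pr. fold b in Ht. lra.
    + destruct HCE as [g [Hg Eg]].
      exists (paste (paste q0 g a) q1 b). split.
      * apply paste_cont; [apply paste_cont| |].
        -- intros; eapply poly_cont; eauto.
        -- auto.
        -- rewrite Hq0a, <- Hea. apply Eg; lra.
        -- intros; eapply poly_cont; eauto.
        -- unfold paste. destruct (Rle_dec b a).
           ++ replace b with a by lra. rewrite Hq0a, <- Hea. replace a with b by lra.
              rewrite Heb; auto.
           ++ rewrite <- Eg by lra. rewrite Heb; auto.
      * intros t Ht. unfold psi, paste. destruct (Rle_dec t b); auto.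
        destruct (Rle_dec t a); auto.
    + assert (HCpsi : CE L psi).
      { destruct HCE as [g [Hg Eg]].
        exists (paste (paste q0 g a) q1 b). split.
        * apply paste_cont; [apply paste_cont| |].
          -- intros; eapply poly_cont; eauto.
          -- auto.
          -- rewrite Hq0a, <- Hea. apply Eg; lra.
          -- intros; eapply poly_cont; eauto.
          -- unfold paste. destruct (Rle_dec b a).
             ++ replace b with a by lra. rewrite Hq0a, <- Hea. replace a with b by lra.
                rewrite Heb; auto.
             ++ rewrite <- Eg by lra. rewrite Heb; auto.
        * intros t Ht. unfold psi, paste. destruct (Rle_dec t b); auto.
          destruct (Rle_dec t a); auto. }
      assert (HF : CE L (Floc eta psi)) by (apply CE_Floc; auto).
      rewrite <- (RI_chasles _ 0 b L) by (eapply CE_ex; eauto; lra).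
      rewrite <- (RI_chasles _ 0 a b) by (eapply CE_ex; eauto; lra).
      assert (I0 : 0 <= RInt (Floc eta psi) 0 a).
      { rewrite (RI_ext_on _ (Floc p0 q0)); [rewrite HI0; apply Rmult_le_pos; lra|lra|].
        intros t Ht. unfold Floc. rewrite Ep0, Pl; auto; try lra; rewrite Hx0; fold a; lra. }
      assert (I1 : 0 <= RInt (Floc eta psi) a b).
      { apply RI_ge0; [lra|eapply CE_ex; eauto; lra|].
        intros t Ht. unfold Floc. rewrite Pm by lra.
        assert (0 <= eta t ^ 2) by apply pow2_ge_0. lra. }
      assert (I2 : 0 <= RInt (Floc eta psi) b L).
      { rewrite (RI_ext_on _ (Floc p1 q1)); [|lra|].
        - rewrite RI_swap, HI1. 2:{ apply exRI_cont, cont_Floc; intros; eapply poly_cont; eauto. }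
          assert (0 <= (L - b) * X1) by (apply Rmult_le_pos; lra). lra.
        - intros t Ht. unfold Floc. rewrite Ep1, Pr; auto; try lra; fold b; lra. }
      lra.
Qed.

Theorem lemma4 :
  forall (M : nat), (1 <= M <= 13)%nat ->
  forall (L kappa : R), 0 < L -> 0 < kappa <= 1 ->
  exists c1 c2 : R, 0 < c1 /\ 0 < c2 /\
  forall (h : R) (nk : nat) (xk : nat -> R) (nl : nat) (xl : nat -> R),
    0 < h ->
    mesh1d L kappa h nk xk ->
    mesh1d L kappa h nl xl ->
    forall eta : R -> R,
      Ytr M nl xl eta -> eta 0 = 0 -> eta L = 0 ->
      forall pi_eta : R -> R,
        is_L2proj L (Wtil M nk xk) eta pi_eta ->
        exists psi : R -> R,
          Wtil M nl xl psi /\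
          L2ip L (fun t => eta t + pi_eta t) psi >= c1 * (L2norm L eta) ^ 2 /\
          L2norm L psi <= c2 * L2norm L eta.
Proof.
  intros M HM L kappa HL Hk. exists (1/100), 6. split; [lra|split; [lra|]].
  intros h nk xk nl xl Hh Hmk Hml eta Hy He0 HeL pi [HWpi Horth].
  assert (HCEe := Ytr_CE _ _ _ _ _ _ _ (proj1 Hk) Hh Hml Hy).
  assert (HCEp := Ytr_CE _ _ _ _ _ _ _ (proj1 Hk) Hh Hmk (proj1 HWpi)).
  assert (Ho := Horth pi HWpi). unfold L2ip in Ho.
  destruct (key M L kappa h nl xl eta HM HL (proj1 Hk) Hh Hml Hy He0 HeL) as [psi [HW [HC HI]]].
  exists psi. split; auto.
  apply core; auto.
Qed.
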